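(* Let $p$ be a prime, let $f:\mathbb{F}_{p^n}\to\mathbb{F}_p$ be $s_1$-plateaued and $g:\mathbb{F}_{p^m}\to\mathbb{F}_p$ be $s_2$-plateaued. Let $M=(m_{x,y})_{x,y\in\mathbb{F}_{p^n}}$ with $m_{x,y}=\zeta_p^{f(x+y)}$ and $N=(n_{a,b})_{a,b\in\mathbb{F}_{p^m}}$ with $n_{a,b}=\zeta_p^{g(a+b)}$, and let $P=M\otimes N$ be their Kronecker product. Then $PP^*P=p^{n+m+s_1+s_2}P$, where $P^*$ is the conjugate transpose.
   Context: $\zeta_p=e^{2\pi i/p}$, $Tr_n(z)=\sum_{i=0}^{n-1}z^{p^i}$. The Walsh transform of $f:\mathbb{F}_{p^n}\to\mathbb{F}_p$ is $\widehat f(\mu)=\sum_{x}\zeta_p^{f(x)-Tr_n(\mu x)}$; $f$ is $s$-plateaued if $|\widehat f(\mu)|\in\{0,p^{(n+s)/2}\}$ for all $\mu$ (analogously for $g$ on $\mathbb{F}_{p^m}$). *)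

(* Defs.v *)
From mathcomp Require Import all_boot all_order all_algebra all_field.
From mathcomp Require Import mxtens.
Set Implicit Arguments. Unset Strict Implicit. Unset Printing Implicit Defensive.
Import GRing.Theory Num.Theory.
Local Open Scope ring_scope.

(* zeta_p = e^{2 pi i / p}: p.-root (-1) is the p-th root of -1 with minimal
   nonnegative argument, i.e. e^{i pi / p}; its square is e^{2 pi i / p}. *)
Definition zeta (p : nat) : algC := (p.-root (-1)) ^+ 2.

Definition trn (F : finFieldType) (p n : nat) (z : F) : F :=
  \sum_(i < n) z ^+ (p ^ i).

Arguments trn {F} p n z.

(* The element of F_p corresponding to an element of the prime subfield
   of F (the trace lands there); k is the unique k < p with k%:R = z. *)
Definition toFp (F : finFieldType) (p : nat) (z : F) : 'F_p :=
  odflt 0 [pick k : 'F_p | ((val k)%:R : F) == z].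

Arguments toFp {F} p z.

Definition walsh (F : finFieldType) (p n : nat) (f : F -> 'F_p) (mu : F) : algC :=
  \sum_(x : F) zeta p ^+ (val (f x - toFp p (trn p n (mu * x)))).

Arguments walsh {F} p n f mu.

Definition plateaued (F : finFieldType) (p n s : nat) (f : F -> 'F_p) : Prop :=
  forall mu : F, `|walsh p n f mu| = 0 \/
                 `|walsh p n f mu| = sqrtC ((p ^ (n + s))%:R).

Arguments plateaued {F} p n s f.

Definition fmatrix (F : finFieldType) (p : nat) (f : F -> 'F_p) :
  'M[algC]_(#|F|) :=
  \matrix_(i, j) zeta p ^+ (val (f (enum_val i + enum_val j))).

Arguments fmatrix {F} p f.

Definition ctrans (m n : nat) (A : 'M[algC]_(m, n)) : 'M[algC]_(n, m) :=
  map_mx (@Num.conj _) A^T.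

(* Main.v *)
Require Import Defs.
From mathcomp Require Import all_boot all_order all_algebra all_field.
From mathcomp Require Import mxtens.
Import GRing.Theory Num.Theory.
Local Open Scope ring_scope.
Set Implicit Arguments. Unset Strict Implicit. Unset Printing Implicit Defensive.

Section Zeta.
Variable p : nat.
Hypothesis pr : prime p.

Lemma zeta_p1 : zeta p ^+ p = 1.
Proof.
by rewrite /zeta -exprM mulnC exprM rootCK ?prime_gt0 // sqrrN expr1n.
Qed.

Lemma zeta_neq1 : zeta p != 1.
Proof.
have p1 := prime_gt1 pr.
rewrite /zeta sqrf_eq1; apply/norP; split.
  apply/eqP=> h; have /= := rootCK (ltnW p1) (-1 : algC); rewrite h expr1n => /eqP.
  by rewrite -subr_eq0 opprK -(natrD _ 1 1) pnatr_eq0.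
apply/eqP=> h; have := rootC_lt0 (-1 : algC) p1; rewrite h ltrN10 //.
Qed.

Lemma zeta_prim : p.-primitive_root (zeta p).
Proof.
have [k pk kp] := prim_order_exists (prime_gt0 pr) zeta_p1.
have := kp; case: k pk kp => [|[|k]] pk kp //.
  by have := prim_expr_order pk; rewrite expr1 => h; have := zeta_neq1; rewrite h eqxx.
have : (k.+2 == p)%N.
  by move: (pr); rewrite /prime => /primeP [_ /(_ _ kp)] /orP [] //.
by move=> /eqP e _; rewrite -{1}e.
Qed.

Definition ee (a : 'F_p) : algC := zeta p ^+ val a.

Lemma val_FpD (a b : 'F_p) : val (a + b) = ((val a + val b) %% p)%N.
Proof. by rewrite /=; congr (_ %% _)%N; rewrite Fp_cast. Qed.

Lemma val_Fp_lt (a : 'F_p) : (val a < p)%N.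
Proof. by have := ltn_ord a; rewrite [X in (_ < X)%N -> _]Fp_cast. Qed.

Lemma ee_add a b : ee (a + b) = ee a * ee b.
Proof. by rewrite /ee val_FpD (prim_expr_mod zeta_prim) exprD. Qed.

Lemma ee0 : ee 0 = 1.
Proof. by rewrite /ee expr0. Qed.

Lemma ee_eq1 a : ee a = 1 -> a = 0.
Proof.
move/eqP; rewrite /ee -(prim_order_dvd zeta_prim) => hd.
apply: val_inj => /=; case: (posnP (val a)) => // pos.
by have := dvdn_leq pos hd; rewrite leqNgt val_Fp_lt.
Qed.

Lemma norm_zeta : `|zeta p| = 1.
Proof.
apply/eqP; rewrite -(pexpr_eq1 (prime_gt0 pr)) // -normrX zeta_p1 normr1 //.
Qed.

Lemma ee_norm a : `|ee a| = 1.
Proof. by rewrite /ee normrX norm_zeta expr1n. Qed.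

Lemma ee_conj a : (ee a)^* = ee (- a).
Proof.
have h : ee a * (ee a)^* = 1 by rewrite -normCK ee_norm expr1n.
have h2 : ee (- a) * ee a = 1 by rewrite -ee_add addNr ee0.
by rewrite -[LHS]mul1r -h2 -mulrA h mulr1.
Qed.

Lemma ee_opp a : ee (- a) = (ee a)^-1.
Proof.
have h2 : ee (- a) * ee a = 1 by rewrite -ee_add addNr ee0.
have na : ee a != 0 by rewrite -normr_eq0 ee_norm oner_eq0.
by apply: (mulIf na); rewrite h2 mulVf.
Qed.

Lemma ee_sub a b : ee (a - b) = ee a * (ee b)^*.
Proof. by rewrite ee_add ee_conj. Qed.
End Zeta.
Section Fld.
Variables (F : finFieldType) (p n : nat).
Hypothesis pr : prime p.
Hypothesis cardF : #|F| = (p ^ n)%N.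

Lemma chF : p \in [pchar F].
Proof. exact: card_finPcharP cardF pr. Qed.

Lemma n_gt0 : (0 < n)%N.
Proof. by case: n cardF => // /eqP; rewrite expn0 eqn_leq leqNgt finNzRing_gt1. Qed.

Lemma frobX_add i (x y : F) : (x + y) ^+ (p ^ i) = x ^+ (p ^ i) + y ^+ (p ^ i).
Proof.
elim: i => [|i IH]; first by rewrite !expr1.
rewrite expnSr !exprM IH.
by rewrite -!(pFrobenius_autE chF) pFrobenius_autD_comm //; exact: mulrC.
Qed.

Lemma trn_add (x y : F) : trn p n (x + y) = trn p n x + trn p n y.
Proof. by rewrite /trn -big_split; apply: eq_bigr => i _; rewrite frobX_add. Qed.

Lemma frobX_sum (I : Type) (r : seq I) (G : I -> F) :
  (\sum_(i <- r) G i) ^+ p = \sum_(i <- r) G i ^+ p.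
Proof.
elim: r => [|a r IH]; first by rewrite !big_nil expr0n gtn_eqF ?prime_gt0.
rewrite !big_cons -IH -!(pFrobenius_autE chF) pFrobenius_autD_comm //; exact: mulrC.
Qed.

Lemma trn_frob (x : F) : trn p n x ^+ p = trn p n x.
Proof.
rewrite /trn frobX_sum.
have e : forall i : 'I_n, (x ^+ (p ^ i)) ^+ p = x ^+ (p ^ i.+1).
  by move=> i; rewrite -exprM expnSr.
rewrite (eq_bigr _ (fun i _ => e i)).
case: n n_gt0 cardF => // k _ ck.
rewrite big_ord_recr big_ord_recl /= -ck expf_card addrC; congr (_ + _).
Qed.

Lemma nat_inj_F i j : (i < p)%N -> (j < p)%N -> (i%:R : F) = j%:R -> i = j.
Proof.
wlog le_ij : i j / (i <= j)%N.
  move=> W ip jp h; case: (leqP i j) => [l|l]; first exact: W.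
  by symmetry; apply: W => //; exact: ltnW.
move=> ip jp h.
have : (p %| j - i)%N by rewrite (dvdn_pcharf chF) natrB // h subrr.
have [/eqP h0|pos /(dvdn_leq pos)] := posnP (j - i).
  by move: h0; rewrite subn_eq0 => h2 _; apply/eqP; rewrite eqn_leq le_ij h2.
by rewrite leqNgt (leq_ltn_trans (leq_subr _ _) jp).
Qed.

Lemma val_Fp_lt' (a : 'F_p) : (val a < p)%N.
Proof. by have := ltn_ord a; rewrite [X in (_ < X)%N -> _]Fp_cast. Qed.

Lemma toFp_nat (k : 'F_p) : toFp p ((val k)%:R : F) = k.
Proof.
rewrite /toFp; case: pickP => [k' /eqP h | h] /=.
  by apply: val_inj; apply: nat_inj_F h; apply: val_Fp_lt'.
by have := h k; rewrite eqxx.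
Qed.

Lemma fixed_inPF (u : F) : u ^+ p = u -> exists k : 'F_p, u = (val k)%:R.
Proof.
move=> hu.
have [/existsP [k /eqP ->]|hn] := boolP [exists k : 'F_p, u == (val k)%:R].
  by exists k.
exfalso.
have p1 := prime_gt1 pr.
pose q : {poly F} := 'X^p - 'X.
have sq : size q = p.+1.
  by rewrite /q size_polyDl size_polyXn // size_polyN size_polyX ltnS.
pose rs := u :: [seq ((val k)%:R : F) | k <- enum 'F_p].
have rootq : forall x : F, x ^+ p = x -> root q x.
  by move=> x hx; rewrite /root /q hornerD hornerN hornerXn hornerX hx subrr.
suff q0 : q = 0 by move: sq; rewrite q0 size_poly0.
apply: (@roots_geq_poly_eq0 _ q rs).
- rewrite /= rootq //=; apply/allP => x /mapP [k _ ->]; apply: rootq.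
  by rewrite -(pFrobenius_autE chF) pFrobenius_aut_nat.
- rewrite /= map_inj_in_uniq ?enum_uniq ?andbT.
    apply/mapP => [[k _ hk]]; move/existsP: hn; apply; exists k; exact/eqP.
  move=> a b _ _ h; apply: val_inj; apply: nat_inj_F h; exact: val_Fp_lt'.
- by rewrite sq /= size_map -cardE card_Fp.
Qed.

Definition psi (x : F) : 'F_p := toFp p (trn p n x).

Lemma psi_add x y : psi (x + y) = psi x + psi y.
Proof.
rewrite /psi trn_add.
have [a ->] := fixed_inPF (trn_frob x); have [b ->] := fixed_inPF (trn_frob y).
rewrite !toFp_nat -natrD -(GRing.natr_mod_pchar chF) -(val_FpD pr) toFp_nat //.
Qed.

Lemma psi0 : psi 0 = 0.
Proof. have h := psi_add 0 0; rewrite addr0 in h; by apply: (addrI (psi 0)); rewrite -h addr0. Qed.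

Lemma psi_nz : exists x, psi x != 0.
Proof.
have [/existsP [x hx]|hn] := boolP [exists x, psi x != 0]; first by exists x.
exfalso.
have z : forall x : F, trn p n x = 0.
  move=> x; have [k hk] := fixed_inPF (trn_frob x).
  have : psi x == 0 by move/existsP: hn => hn; apply/negPn/negP => h; apply: hn; exists x.
  by rewrite /psi hk toFp_nat => /eqP ->.
pose q : {poly F} := \sum_(i < n) 'X^(p ^ i).
have n0 := n_gt0.
have qc : q`_(p ^ n.-1) = 1.
  rewrite /q coef_sum; case: n n0 => // k _ /=.
  rewrite big_ord_recr /= coefXn eqxx big1 ?add0r // => i _.
  by rewrite coefXn eqn_exp2l ?prime_gt1 // gtn_eqF.
have sq : (size q <= (p ^ n.-1).+1)%N.
  rewrite /q; apply: (big_ind (fun r : {poly F} => size r <= (p ^ n.-1).+1)%N).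
  - by rewrite size_poly0.
  - by move=> a b ha hb; apply: leq_trans (size_polyD a b) _; rewrite geq_max ha hb.
  - move=> j _; rewrite size_polyXn ltnS leq_pexp2l ?prime_gt0 //.
    by rewrite -ltnS prednK // ltn_ord.
suff q0 : q = 0 by move: qc; rewrite q0 coef0 => /eqP; rewrite eq_sym oner_eq0.
apply: (@roots_geq_poly_eq0 _ q (enum F)).
- apply/allP => x _; rewrite /root /q horner_sum.
  under eq_bigr do rewrite hornerXn.
  by have := z x; rewrite /trn => ->.
- exact: enum_uniq.
- apply: leq_trans sq _; rewrite -cardE cardF.
  case: n n0 => // k _ /=; rewrite expnS.
  have p1 := prime_gt1 pr.
  rewrite -[X in (X < _)%N]mul1n ltn_pmul2r ?expn_gt0 ?prime_gt0 //.
Qed.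

Lemma psi_sub x y : psi (x - y) = psi x - psi y.
Proof. by apply/eqP; rewrite eq_sym subr_eq -psi_add subrK. Qed.

Lemma psi_opp x : psi (- x) = - psi x.
Proof. by rewrite -sub0r psi_sub psi0 sub0r. Qed.

Lemma char_sum (a : F) :
  \sum_(x : F) ee (psi (a * x)) = if a == 0 then (#|F|%:R : algC) else 0.
Proof.
have [->|a0] := eqVneq a 0.
  under eq_bigr do rewrite mul0r psi0 ee0.
  by rewrite sumr_const.
have [x0 hx0] := psi_nz.
set S := \sum_(x : F) _.
have e : S = \sum_(x : F) ee (psi (a * (x + x0 / a))).
  by rewrite /S (reindex_inj (addIr (x0 / a))).
have : S = S * ee (psi x0).
  rewrite {1}e /S mulr_suml; apply: eq_bigr => x _.
  by rewrite mulrDr mulrCA divff // mulr1 psi_add (ee_add pr).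
move/eqP; rewrite -subr_eq0 -{1}(mulr1 S) -mulrBr mulf_eq0 subr_eq0 => /orP [/eqP //|].
by move/eqP => /esym /(ee_eq1 pr) /eqP; rewrite (negbTE hx0).
Qed.
End Fld.

Section Mat.
Variables (F : finFieldType) (p n s : nat) (f : F -> 'F_p).
Hypothesis pr : prime p.
Hypothesis cardF : #|F| = (p ^ n)%N.
Hypothesis plat : plateaued p n s f.

Local Notation psi := (psi p n).
Definition chi (x : F) : algC := ee (psi x).
Definition Vm : 'M[algC]_#|F| := \matrix_(i, j) chi (enum_val i * enum_val j).
Definition Dm : 'M[algC]_#|F| := diag_mx (\row_j walsh p n f (enum_val j)).
Local Notation c := (#|F|%:R : algC).

Lemma c_neq0 : c != 0.
Proof. by rewrite pnatr_eq0 -lt0n; apply/card_gt0P; exists 0. Qed.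

Lemma sum_enum (G : F -> algC) : \sum_(i < #|F|) G (enum_val i) = \sum_x G x.
Proof. by rewrite -(big_enum_val G). Qed.

Lemma chi_conj x : (chi x)^* = chi (- x).
Proof. by rewrite /chi (ee_conj pr) (psi_opp pr cardF). Qed.

Lemma orth (x y : F) :
  \sum_(mu : F) chi (mu * x) * (chi (mu * y))^* = if x == y then c else 0.
Proof.
rewrite -subr_eq0 -(char_sum pr cardF); apply: eq_bigr => mu _.
rewrite /chi (ee_conj pr) -(psi_opp pr cardF) -(ee_add pr) -(psi_add pr cardF).
by rewrite mulrBl (mulrC x) (mulrC y).
Qed.

Lemma chi_add a b : chi (a + b) = chi a * chi b.
Proof. by rewrite /chi (psi_add pr cardF) (ee_add pr). Qed.

Lemma fourier (x y : F) :
  \sum_(mu : F) chi (x * mu) * walsh p n f mu * chi (mu * y) = c * ee (f (x + y)).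
Proof.
have e : forall z mu, chi (x * mu) * zeta p ^+ val (f z - toFp p (trn p n (mu * z))) * chi (mu * y)
   = ee (f z) * chi ((x + y - z) * mu).
  move=> z mu.
  rewrite -/(ee (f z - toFp p (trn p n (mu * z)))) -/(psi (mu * z)) (ee_sub pr) -/(chi (mu * z)).
  rewrite chi_conj.
  have -> : (x + y - z) * mu = x * mu + (- (mu * z)) + mu * y.
    by rewrite mulrBl mulrDl (mulrC y) (mulrC z) addrAC.
  by rewrite !chi_add mulrCA -!mulrA.
rewrite /walsh.
under eq_bigr do rewrite mulr_sumr mulr_suml.
rewrite exchange_big /=.
under eq_bigr do under eq_bigr do rewrite e.
under eq_bigr do rewrite -mulr_sumr (char_sum pr cardF).
rewrite (bigD1 (x + y)) //= subrr eqxx big1 ?addr0; first by rewrite mulrC.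
move=> z hz; by rewrite subr_eq0 eq_sym (negbTE hz) mulr0.
Qed.

Local Notation ev := (@enum_val F _).
Local Notation Vc := (map_mx (@Num.conj _) Vm).
Local Notation Dc := (map_mx (@Num.conj _) Dm).

Lemma VDV : Vm *m Dm *m Vm = c *: fmatrix p f.
Proof.
apply/matrixP => i j; rewrite mul_mx_diag !mxE.
transitivity (\sum_(mu : F) chi (ev i * mu) * walsh p n f mu * chi (mu * ev j)).
  by rewrite -sum_enum; apply: eq_bigr => k _; rewrite !mxE.
by rewrite fourier.
Qed.

Lemma VVc : Vm *m Vc = c%:M.
Proof.
apply/matrixP => i j; rewrite !mxE.
transitivity (\sum_(mu : F) chi (mu * ev i) * (chi (mu * ev j))^*).
  by rewrite -sum_enum; apply: eq_bigr => k _; rewrite !mxE [ev i * _]mulrC.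
apply: etrans (orth _ _) _; rewrite (inj_eq enum_val_inj); by case: (i == j).
Qed.

Lemma VcV : Vc *m Vm = c%:M.
Proof.
apply/matrixP => i j; rewrite !mxE.
transitivity (\sum_(mu : F) chi (mu * ev j) * (chi (mu * ev i))^*).
  by rewrite -sum_enum; apply: eq_bigr => k _; rewrite !mxE mulrC (mulrC (ev i)).
apply: etrans (orth _ _) _; rewrite (inj_eq enum_val_inj) eq_sym; by case: (i == j).
Qed.

Lemma DDD : Dm *m Dc *m Dm = (p ^ (n + s))%:R *: Dm.
Proof.
rewrite /Dm map_diag_mx !mulmx_diag.
apply/matrixP => i j; rewrite !mxE.
case: (i == j); rewrite ?mulr0 //= ?mulr1n.
move: (enum_val i) => mu; case: (plat mu) => h; set w := walsh p n f mu in h *.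
  by move: h; rewrite -/w => /eqP; rewrite normr_eq0 => /eqP ->; rewrite !mulr0.
by rewrite -normCK -/w h sqrtCK.
Qed.

Lemma Mform : fmatrix p f = c^-1 *: (Vm *m Dm *m Vm).
Proof. by rewrite VDV scalerA mulVf ?c_neq0 // scale1r. Qed.

Lemma fmatrix_sym : (fmatrix p f)^T = fmatrix p f.
Proof. by apply/matrixP => i j; rewrite !mxE addrC. Qed.

Lemma Mcform : ctrans (fmatrix p f) = c^-1 *: (Vc *m Dc *m Vc).
Proof.
rewrite /ctrans fmatrix_sym {1}Mform map_mxZ !map_mxM.
by rewrite fmorphV rmorph_nat.
Qed.

Lemma single : fmatrix p f *m ctrans (fmatrix p f) *m fmatrix p f
   = (p ^ (n + s))%:R *: fmatrix p f.
Proof.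
rewrite Mcform Mform.
rewrite -!scalemxAl -!scalemxAr !scalerA.
rewrite !mulmxA -(mulmxA (Vm *m Dm) Vm Vc) VVc mul_mx_scalar -!scalemxAl.
rewrite -(mulmxA (Vm *m Dm *m Dc) Vc Vm) VcV mul_mx_scalar -!scalemxAl.
rewrite -(mulmxA Vm Dm Dc) -(mulmxA Vm (Dm *m Dc) Dm) DDD -scalemxAr -!scalemxAl !scalerA.
congr (_ *: _).
have cn := c_neq0.
by rewrite mulVf // mul1r mulrA divfK // mulrC.
Qed.
End Mat.

Lemma tens_scale (m1 n1 m2 n2 : nat) (a b : algC) (A : 'M[algC]_(m1, n1)) (B : 'M[algC]_(m2, n2)) :
  (a *: A) *t (b *: B) = (a * b) *: (A *t B).
Proof. by apply/matrixP => i j; rewrite !mxE mulrACA. Qed.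

Unset Implicit Arguments.

Theorem mainTheorem8 (p n m s1 s2 : nat) (F G : finFieldType)
  (f : F -> 'F_p) (g : G -> 'F_p) :
  prime p -> #|F| = (p ^ n)%N -> #|G| = (p ^ m)%N ->
  plateaued p n s1 f -> plateaued p m s2 g ->
  let P := fmatrix p f *t fmatrix p g in
  P *m ctrans P *m P = ((p ^ (n + m + s1 + s2))%N)%:R *: P.
Proof.
move=> pr cF cG pf pg P.
have hc : forall (m1 n1 m2 n2 : nat) (A : 'M[algC]_(m1, n1)) (B : 'M[algC]_(m2, n2)),
    ctrans (A *t B) = ctrans A *t ctrans B.
  by move=> m1 n1 m2 n2 A B; rewrite /ctrans trmx_tens map_mxT.
rewrite /P hc !tensmx_mul (single pr cF pf) (single pr cG pg) tens_scale -natrM -expnD.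
by rewrite addnACA addnA.
Qed.
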